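(* $u_n\le \frac{2+o(1)}{\sqrt{n}}$ as $n\to\infty$; that is, $\limsup_{n\to\infty}\sqrt{n}\,u_n\le 2$.
   Context: For a real orthogonal $n\times n$ matrix $M=(m_{i,j})$ let $u_M:=\max_{1\le i,j\le n}|m_{i,j}|$, and let $u_n:=\min_{M\in O(n)} u_M$, where $O(n)$ denotes the group of real orthogonal $n\times n$ matrices. *)

(* Defs.v *)
From HB Require Import structures.
From mathcomp Require Import all_boot all_order all_algebra.
From mathcomp Require Import all_classical all_reals all_analysis.
Set Implicit Arguments. Unset Strict Implicit. Unset Printing Implicit Defensive.
Import Order.TTheory GRing.Theory Num.Theory.
Local Open Scope ring_scope.
Local Open Scope classical_set_scope.

Definition orthogonal_mx (R : realType) (n : nat) (M : 'M[R]_n) : Prop :=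
  M *m M^T = 1%:M.

(* u_M = max_{i,j} |m_{i,j}| (0 for the empty matrix, n = 0) *)
Definition u_mx (R : realType) (n : nat) (M : 'M[R]_n) : R :=
  \big[Num.max/0]_(i < n) \big[Num.max/0]_(j < n) `|M i j|.

(* u_n = min over O(n) of u_M (the minimum exists by compactness, so it
   equals the infimum used here) *)
Definition u_n (R : realType) (n : nat) : R :=
  inf [set u_mx M | M in [set M : 'M[R]_n | orthogonal_mx M]].

(* Main.v *)
Set Warnings "-all".
Require Import Defs.
From HB Require Import structures.
From mathcomp Require Import all_boot all_order all_algebra.
From mathcomp Require Import all_classical all_reals all_analysis.
From mathcomp Require Import ring lra zify.
Import Order.TTheory GRing.Theory Num.Theory.
Local Open Scope ring_scope.

Section S.
Variable R : realType.

Lemma sin_pin (m : nat) : sin (pi *+ m) = 0 :> R.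
Proof.
elim: m => [|m IH]; first by rewrite mulr0n sin0.
by rewrite mulrS addrC sinDpi IH oppr0.
Qed.

Lemma sumcos0 (n m : nat) : (0 < m < n.*2)%N ->
  \sum_(j < n) cos ((2 * (j:nat)%:R + 1) * m%:R * (pi / (n.*2)%:R)) = 0 :> R.
Proof.
move=> /andP[m0 mn].
have n0 : (0 < n)%N by case: n mn => //; rewrite double0 ltn0.
have n2 : (n.*2)%:R != 0 :> R by rewrite pnatr_eq0 -lt0n double_gt0.
set a : R := m%:R * (pi / (n.*2)%:R).
have sa : 0 < sin a.
  apply: sin_gt0_pi; apply/andP; split.
    by rewrite /a mulr_gt0 ?ltr0n ?divr_gt0 ?pi_gt0 ?ltr0n ?double_gt0.
  rewrite /a mulrA ltr_pdivrMr ?ltr0n ?double_gt0 // mulrC ltr_pM2l ?pi_gt0 //.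
  by rewrite ltr_nat.
pose f (j : nat) := sin (2 * j%:R * a).
have H : \sum_(j < n) (2 * sin a) * cos ((2 * (j:nat)%:R + 1) * m%:R * (pi / (n.*2)%:R)) = f n - f 0%N.
  rewrite -(@telescope_sumr _ 0%N n f (leq0n n)) big_mkord.
  apply: eq_bigr => j _.
  rewrite /f.
  have -> : (2 * (j:nat)%:R + 1) * m%:R * (pi / (n.*2)%:R) = (2 * (j:nat)%:R + 1) * a by rewrite /a; ring.
  have -> : 2 * ((j:nat).+1)%:R * a = (2 * (j:nat)%:R + 1) * a + a by rewrite -natr1; ring.
  have -> : 2 * (j:nat)%:R * a = (2 * (j:nat)%:R + 1) * a - a by ring.
  rewrite sinD sinB; ring.
rewrite -mulr_sumr in H.
have : f n - f 0%N = 0.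
  rewrite /f mulr0 mul0r sin0 subr0.
  have -> : 2 * n%:R * a = pi *+ m.
    have nn : n%:R != 0 :> R by rewrite pnatr_eq0 -lt0n.
    rewrite /a -mul2n natrM -mulr_natr; field. all: try exact: nn.
  exact: sin_pin.
move=> E; rewrite E in H.
move: H => /eqP; rewrite mulf_eq0 => /orP[|/eqP //].
by rewrite mulf_eq0 (gt_eqF sa) orbF pnatr_eq0.
Qed.

Definition alp (n : nat) : R := pi / (n.*2)%:R.
Definition X (n j k : nat) : R := (2 * j%:R + 1) * k%:R * alp n.
Definition T (n m : nat) : R := \sum_(j < n) cos (X n j m).

Lemma T0 n : T n 0 = n%:R.
Proof.
rewrite /T (eq_bigr (fun _ => 1)); last by move=> j _; rewrite /X mulr0 mul0r cos0.
by rewrite sumr_const card_ord.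
Qed.

Lemma Tz n m : (0 < m < n.*2)%N -> T n m = 0.
Proof. exact: sumcos0. Qed.

Lemma prodcos x y : cos x * cos y = (cos (x - y) + cos (x + y)) / 2 :> R.
Proof. rewrite cosB cosD; field. by []. Qed.

Lemma sum_pair n k l : \sum_(j < n) cos (X n j k) * cos (X n j l) =
  (T n (if (l <= k)%N then k - l else l - k)%N + T n (k + l)%N) / 2.
Proof.
rewrite /T -big_split /= mulr_suml; apply: eq_bigr => j _.
rewrite prodcos; congr (_ * _); congr (_ + _).
  case: leqP => lk.
    by congr cos; rewrite /X natrB //; ring.
  rewrite -cosN; congr cos; rewrite /X natrB ?(ltnW lk) //; ring.
by congr cos; rewrite /X natrD; ring.
Qed.

Definition cc (n k : nat) : R :=
  if k == 0%N then Num.sqrt (n%:R^-1) else Num.sqrt (2 / n%:R).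

Definition dct (n : nat) : 'M[R]_n :=
  \matrix_(k, j) (cc n k * cos (X n j k)).

Lemma dct_orth n : orthogonal_mx (dct n).
Proof.
apply/matrixP => k l; rewrite !mxE.
have n0 : (0 < n)%N by case: n k l => [[]|].
have nn : n%:R != 0 :> R by rewrite pnatr_eq0 -lt0n.
rewrite (eq_bigr (fun j : 'I_n => cc n k * cc n l * (cos (X n j k) * cos (X n j l))));
  last by move=> j _; rewrite !mxE; ring.
rewrite -mulr_sumr sum_pair.
have ltk := ltn_ord k; have ltl := ltn_ord l.
case: (eqVneq k l) => [<-|kl].
  rewrite leqnn subnn T0 /cc.
  rewrite [X in _ = X]/=; case: eqP => k0.
    rewrite k0 T0 -expr2 sqr_sqrtr; last by rewrite invr_ge0 ler0n.
    field; exact: nn.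
  rewrite Tz; last by rewrite addnn double_gt0 ltn_double ltk andbT lt0n; apply/eqP.
  rewrite -expr2 sqr_sqrtr; last by apply: divr_ge0; [lra | exact: ler0n].
  field; exact: nn.
have kl' : (k:nat) != l by [].
have H1 : T n (k + l)%N = 0.
  apply: Tz; move: kl' ltk ltl; clear; move: (k:nat) (l:nat) => a b; rewrite -addnn neq_ltn => /orP[h1|h1] h2 h3; apply/andP; split; lia.
have H2 : T n (if (l <= k)%N then (k - l)%N else (l - k)%N) = 0.
  apply: Tz; move: kl' ltk ltl; clear; move: (k:nat) (l:nat) => a b.
  rewrite -addnn neq_ltn => /orP[h1|h1] h2 h3; case: (leqP b a) => h4; apply/andP; split; lia.
rewrite H1 H2 addr0 mul0r mulr0; reflexivity.
Qed.
Lemma umx_ge0 n (M : 'M[R]_n) : 0 <= u_mx M.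
Proof.
rewrite /u_mx; apply: (big_ind (fun x : R => 0 <= x)) => //.
  by move=> x y hx hy; rewrite le_max hx.
move=> i _; apply: (big_ind (fun x : R => 0 <= x)) => //.
  by move=> x y hx hy; rewrite le_max hx.
Qed.

Lemma umx_le n (M : 'M[R]_n) c : 0 <= c -> (forall i j, `|M i j| <= c) -> u_mx M <= c.
Proof.
move=> c0 H; rewrite /u_mx; apply: (big_ind (fun x : R => x <= c)) => //.
  by move=> x y hx hy; rewrite ge_max hx hy.
move=> i _; apply: (big_ind (fun x : R => x <= c)) => //.
  by move=> x y hx hy; rewrite ge_max hx hy.
Qed.

Lemma dct_bound n : (0 < n)%N -> u_mx (dct n) <= Num.sqrt (2 / n%:R).
Proof.
move=> n0; apply: umx_le; first exact: sqrtr_ge0.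
move=> i j; rewrite mxE normrM.
have hc : `|cos (X n j i)| <= 1 by rewrite ler_norml cos_le1 cos_geN1.
have hk : `|cc n i| <= Num.sqrt (2 / n%:R).
  rewrite ger0_norm /cc; last by case: ifP => _; exact: sqrtr_ge0.
  case: ifP => _ //; apply: ler_wsqrtr.
  have : 0 <= n%:R^-1 :> R by rewrite invr_ge0 ler0n.
  move=> h; rewrite -[X in X <= _]mul1r; apply: ler_wpM2r; [exact: h | lra].
rewrite -[X in _ <= X]mulr1; apply: ler_pM => //; exact: normr_ge0.
Qed.

Lemma un_le n : (0 < n)%N -> u_n R n <= Num.sqrt (2 / n%:R).
Proof.
move=> n0; apply: (@le_trans _ _ (u_mx (dct n))); last exact: dct_bound.
apply: ge_inf; last by exists (dct n) => //; exact: dct_orth.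
by exists 0 => _ [M _ <-]; exact: umx_ge0.
Qed.

Lemma main_bound n : Num.sqrt (n%:R) * u_n R n <= 2.
Proof.
case: n => [|n]; first by rewrite sqrtr0 mul0r; lra.
have n0 : (0 < n.+1)%N by [].
have nn : n.+1%:R != 0 :> R by rewrite pnatr_eq0.
apply: (@le_trans _ _ (Num.sqrt (n.+1%:R) * Num.sqrt (2 / n.+1%:R))).
  by apply: ler_wpM2l; [exact: sqrtr_ge0 | exact: un_le].
rewrite -sqrtrM ?ler0n // (_ : n.+1%:R * (2 / n.+1%:R) = 2 :> R); last by field.
have h := sqr_sqrtr (ler0n R 2).
have h0 := sqrtr_ge0 (2%:R : R).
move: h h0; set s := Num.sqrt _; move=> h h0.
rewrite expr2 in h; nra.
Qed.
End S.
Lemma esup_le2 (R : realType) (u : nat -> R) (c : R) : (forall n, u n <= c) ->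
  (limn_esup (fun n => (u n)%:E) <= c%:E)%E.
Proof.
move=> H; rewrite limn_esup_lim (cvg_lim _ (@cvg_esups_inf _ _))//.
apply: (@le_trans _ _ (esups (fun n => (u n)%:E) 0)).
  by apply: ereal_inf_lbound; exists 0%N.
rewrite /esups /=; apply: ub_ereal_sup => _ [k _ <-]; by rewrite lee_fin.
Qed.

Theorem theorem2p3 (R : realType) :
  (limn_esup (fun n : nat => (Num.sqrt (n%:R : R) * u_n R n)%:E) <= 2%:E)%E.
Proof.
apply: (@esup_le2 R (fun n : nat => Num.sqrt (n%:R : R) * u_n R n) 2).
exact: main_bound.
Qed.
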